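(* Let $(\mathfrak g,\mathcal F_\bullet\mathfrak g,R)$ be a filtered Rota–Baxter Lie algebra over a field of characteristic zero, let $\mathfrak R$ be the corresponding Rota–Baxter operator $\mathfrak R(x)=\log(\widehat{\mathcal R}(\exp(x)))$ on the group $(\widehat{\mathfrak g},* )$, let $\phi:\mathfrak g\to\mathfrak g$ be an automorphism of the filtered Lie algebra $(\mathfrak g,\mathcal F_\bullet\mathfrak g)$, and let $Q=\phi^{-1}R\phi$. Then $(\mathfrak g,\mathcal F_\bullet\mathfrak g,Q)$ is a filtered Rota–Baxter Lie algebra, and the corresponding Rota–Baxter operator $\mathfrak Q(x)=\log(\widehat{\mathcal Q}(\exp(x)))$ on $(\widehat{\mathfrak g},* )$ satisfies $\mathfrak Q=\widehat\phi^{-1}\mathfrak R\widehat\phi$, where $\widehat\phi$ is the natural extension of $\phi$ to $\widehat{\mathfrak g}$.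
   Context: Filtered Lie algebra: Lie algebra $\mathfrak g$ with subspaces $\mathfrak g=\mathcal F_1\mathfrak g\supset\mathcal F_2\mathfrak g\supset\cdots$, $[\mathcal F_n\mathfrak g,\mathcal F_m\mathfrak g]\subset\mathcal F_{n+m}\mathfrak g$; an automorphism of it is a Lie algebra automorphism $\phi$ with $\phi(\mathcal F_n\mathfrak g)=\mathcal F_n\mathfrak g$ for all $n$. Filtered Rota–Baxter Lie algebra: in addition a linear $R$ with $[R(x),R(y)]=R([R(x),y]+[x,R(y)]+[x,y])$ and $R(\mathcal F_n\mathfrak g)\subset\mathcal F_n\mathfrak g$. For such $R$, let $\mathcal R:U(\mathfrak g)\to U(\mathfrak g)$ be the linear map with $\mathcal R(1)=1$, $\mathcal R(x)=R(x)$, $\mathcal R(xh)=R(x)\mathcal R(h)-\mathcal R([R(x),h])$; it preserves the filtration $\mathcal F_0U=U(\mathfrak g)$, $\mathcal F_nU=\mathrm{span}\{x_1\cdots x_k: x_i\in\mathcal F_{n_i}\mathfrak g,\sum n_i\ge n\}$, and induces $\widehat{\mathcal R}$ on $\widehat U(\mathfrak g)=\varprojlim U(\mathfrak g)/\mathcal F_nU(\mathfrak g)$; $\mathcal Q$, $\widehat{\mathcal Q}$ are defined in the same way from $Q$. $\widehat{\mathfrak g}=\varprojlim\mathfrak g/\mathcal F_{n+1}\mathfrak g\subset\widehat U(\mathfrak g)$; $\exp(x)=\sum x^n/n!$ is a bijection from $\widehat{\mathfrak g}$ onto the group $\mathbb G$ of nonzero group-like elements of $\widehat U(\mathfrak g)$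 with inverse $\log$; $\widehat{\mathcal R}(\mathbb G)\subset\mathbb G$; and $x*y=\log(\exp(x)\exp(y))$. *)

(* Defs.v *)
From HB Require Import structures.
From mathcomp Require Import all_boot all_order all_algebra.
Set Implicit Arguments. Unset Strict Implicit. Unset Printing Implicit Defensive.
Import Order.TTheory GRing.Theory Num.Theory.
Local Open Scope ring_scope.

Definition linmap (K : fieldType) (V W : lmodType K) (f : V -> W) : Prop :=
  forall (a : K) (x y : V), f (a *: x + y) = a *: f x + f y.

Definition is_lie_bracket (K : fieldType) (g : lmodType K) (br : g -> g -> g) : Prop :=
  [/\ forall z, linmap (fun x => br x z),
      forall x, linmap (br x),
      forall x, br x x = 0
    & forall x y z, br x (br y z) + br y (br z x) + br z (br x y) = 0].

Definition is_subspace (K : fieldType) (g : lmodType K) (S : pred g) : Prop :=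
  S 0 /\ forall (a : K) x y, S x -> S y -> S (a *: x + y).

(* Filtration g = F_1 g ⊃ F_2 g ⊃ ...  (only the indices n >= 1 are used) *)
Definition is_lie_filtration (K : fieldType) (g : lmodType K) (br : g -> g -> g)
  (F : nat -> pred g) : Prop :=
  [/\ forall x, F 1%N x,
      forall n, (1 <= n)%N -> is_subspace (F n),
      forall n x, (1 <= n)%N -> F n.+1 x -> F n x
    & forall n m x y, (1 <= n)%N -> (1 <= m)%N -> F n x -> F m y -> F (n + m)%N (br x y)].

Definition is_RB (K : fieldType) (g : lmodType K) (br : g -> g -> g) (R : g -> g) : Prop :=
  linmap R /\
  forall x y, br (R x) (R y) = R (br (R x) y + br x (R y) + br x y).

Definition filtered_RB (K : fieldType) (g : lmodType K) (br : g -> g -> g)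
  (F : nat -> pred g) (R : g -> g) : Prop :=
  is_RB br R /\ forall n x, (1 <= n)%N -> F n x -> F n (R x).

Definition filtered_lie_aut (K : fieldType) (g : lmodType K) (br : g -> g -> g)
  (F : nat -> pred g) (phi phi_inv : g -> g) : Prop :=
  [/\ linmap phi, forall x y, phi (br x y) = br (phi x) (phi y),
      cancel phi phi_inv, cancel phi_inv phi
    & forall n x, (1 <= n)%N -> (F n (phi x) <-> F n x)].

Definition lie_map (K : fieldType) (g : lmodType K) (br : g -> g -> g)
  (A : algType K) (f : g -> A) : Prop :=
  linmap f /\ forall x y, f (br x y) = f x * f y - f y * f x.

Definition alg_morph (K : fieldType) (A B : algType K) (h : A -> B) : Prop :=
  [/\ linmap h, h 1 = 1 & forall u v, h (u * v) = h u * h v].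

Definition is_UEA (K : fieldType) (g : lmodType K) (br : g -> g -> g)
  (U : algType K) (iota : g -> U) : Prop :=
  lie_map br iota /\
  forall (A : algType K) (f : g -> A), lie_map br f ->
    (exists h : U -> A, alg_morph h /\ forall x, h (iota x) = f x) /\
    (forall h1 h2 : U -> A, alg_morph h1 -> alg_morph h2 ->
       (forall x, h1 (iota x) = f x) -> (forall x, h2 (iota x) = f x) ->
       forall u, h1 u = h2 u).

(* F_n U = span{ x_1 ... x_k : x_i in F_{n_i} g, n_i >= 1, sum n_i >= n } *)
Definition FU (K : fieldType) (g : lmodType K) (U : algType K) (iota : g -> U)
  (F : nat -> pred g) (n : nat) (u : U) : Prop :=
  exists s : seq (K * seq (nat * g)),
    (forall p, p \in s ->
       (forall q, q \in p.2 -> (1 <= q.1)%N /\ F q.1 q.2) /\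
       (n <= \sum_(q <- p.2) q.1)%N) /\
    u = \sum_(p <- s) p.1 *: \prod_(q <- p.2) iota q.2.

Definition RB_lift (K : fieldType) (g : lmodType K) (U : algType K) (iota : g -> U)
  (R : g -> g) (calR : U -> U) : Prop :=
  [/\ linmap calR, calR 1 = 1
    & forall (x : g) (h : U),
        calR (iota x * h) =
        iota (R x) * calR h - calR (iota (R x) * h - h * iota (R x))].

(* An element of \hat U = lim U / F_n U is represented by a compatible
   sequence of representatives u_n (class in U / F_n U). *)
Definition hatU_elt (K : fieldType) (g : lmodType K) (U : algType K) (iota : g -> U)
  (F : nat -> pred g) (u : nat -> U) : Prop :=
  forall n, FU iota F n (u n.+1 - u n).

Definition hatU_eq (K : fieldType) (g : lmodType K) (U : algType K) (iota : g -> U)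
  (F : nat -> pred g) (u v : nat -> U) : Prop :=
  forall n, FU iota F n (u n - v n).

(* An element of \hat g = lim g / F_{n+1} g : compatible sequence x_n (class mod F_{n+1} g) *)
Definition hatg_elt (K : fieldType) (g : lmodType K) (F : nat -> pred g) (x : nat -> g) : Prop :=
  forall n, F n.+2 (x n.+1 - x n).

(* exp and log, computed at level n (modulo F_n U); higher terms vanish mod F_n U *)
Definition expU (K : fieldType) (U : algType K) (n : nat) (u : U) : U :=
  \sum_(k < n.+1) (k`!%:R : K)^-1 *: u ^+ k.

Definition logU (K : fieldType) (U : algType K) (n : nat) (y : U) : U :=
  \sum_(1 <= k < n.+1) ((-1) ^+ k.+1 / (k%:R : K)) *: (y - 1) ^+ k.

Definition frakR (K : fieldType) (g : lmodType K) (U : algType K) (iota : g -> U)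
  (calR : U -> U) (x : nat -> g) : nat -> U :=
  fun n => logU n (calR (expU n (iota (x n)))).

(* level-wise extension of a map to sequences (used for \hat phi on \hat g
   and for the extension of an algebra map of U to \hat U) *)
Definition hatmap (A B : Type) (f : A -> B) (x : nat -> A) : nat -> B := fun n => f (x n).

(* Main.v *)
Require Import Defs.
From HB Require Import structures.
From mathcomp Require Import all_boot all_order all_algebra.
Import Order.TTheory GRing.Theory Num.Theory.
Local Open Scope ring_scope.
Set Implicit Arguments. Unset Strict Implicit.

Section Lin.
Variables (K : fieldType) (V W : lmodType K) (f : V -> W) (Hf : linmap f).

Lemma linmap0 : f 0 = 0.
Proof.
have := Hf 1 0 0; rewrite !scale1r addr0 => H.
have := congr1 (fun z => z - f 0) H; rewrite /= addrK subrr => H'.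
by rewrite -H'.
Qed.

Lemma linmapD x y : f (x + y) = f x + f y.
Proof. by have := Hf 1 x y; rewrite !scale1r. Qed.

Lemma linmapZ a x : f (a *: x) = a *: f x.
Proof. by have := Hf a x 0; rewrite !addr0 linmap0 addr0. Qed.

Lemma linmapN x : f (- x) = - f x.
Proof. by rewrite -scaleN1r linmapZ scaleN1r. Qed.

Lemma linmapB x y : f (x - y) = f x - f y.
Proof. by rewrite linmapD linmapN. Qed.

Lemma linmap_sum (I : Type) (r : seq I) (P : pred I) (G : I -> V) :
  f (\sum_(i <- r | P i) G i) = \sum_(i <- r | P i) f (G i).
Proof. exact: (big_morph f linmapD linmap0). Qed.
End Lin.

Section Alg.
Variables (K : fieldType) (A B : algType K) (h : A -> B) (Hh : alg_morph h).

Lemma alg_exp u k : h (u ^+ k) = (h u) ^+ k.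
Proof.
case: Hh => _ H1 HM; elim: k => [|k IH]; first by rewrite !expr0.
by rewrite !exprS HM IH.
Qed.

Lemma alg_expU n u : h (expU n u) = expU n (h u).
Proof.
case: (Hh) => Hl _ _; rewrite /expU linmap_sum //.
by apply: eq_bigr => i _; rewrite linmapZ // alg_exp.
Qed.

Lemma alg_logU n u : h (logU n u) = logU n (h u).
Proof.
case: (Hh) => Hl H1 _; rewrite /logU linmap_sum //.
by apply: eq_bigr => i _; rewrite linmapZ // alg_exp linmapB // H1.
Qed.
End Alg.

Section Agree.
Variables (K : fieldType) (g : lmodType K) (br : g -> g -> g) (U : algType K)
  (iota : g -> U) (Hiota : lie_map br iota) (Q : g -> g) (c1 c2 : U -> U)
  (H1 : RB_lift iota Q c1) (H2 : RB_lift iota Q c2).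

Definition w (bs : seq g) : U := \prod_(b <- bs) iota b.
Definition Sk (k : nat) (u : U) : Prop :=
  exists s : seq (K * seq g), all (fun p => size p.2 == k) s /\
    u = \sum_(p <- s) p.1 *: w p.2.
Definition ad (a : g) (u : U) := iota a * u - u * iota a.

Lemma Sk0 k : Sk k 0.
Proof. by exists [::]; rewrite big_nil. Qed.

Lemma Sk_w k bs : size bs = k -> Sk k (w bs).
Proof.
move=> Hs; exists [:: (1, bs)]; rewrite /= Hs eqxx; split => //.
by rewrite big_cons big_nil scale1r addr0.
Qed.

Lemma Sk_lin k a u v : Sk k u -> Sk k v -> Sk k (a *: u + v).
Proof.
move=> [s1 [Hs1 ->]] [s2 [Hs2 ->]].
exists (map (fun p => (a * p.1, p.2)) s1 ++ s2); split.
  by rewrite all_cat all_map Hs1 Hs2.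
rewrite big_cat big_map scaler_sumr; congr (_ + _).
by apply: eq_bigr => p _; rewrite scalerA.
Qed.

Lemma Sk_mull k x u : Sk k u -> Sk k.+1 (iota x * u).
Proof.
move=> [s [Hs ->]]; exists (map (fun p => (p.1, x :: p.2)) s); split.
  by rewrite all_map; apply/allP => p /(allP Hs) /= /eqP ->.
rewrite mulr_sumr big_map; apply: eq_bigr => p _.
by rewrite /w big_cons scalerAr.
Qed.

Lemma Sk_ind k (P : U -> Prop) : P 0 -> (forall a u v, P u -> P v -> P (a *: u + v)) ->
  (forall bs, size bs = k -> P (w bs)) -> forall u, Sk k u -> P u.
Proof.
move=> P0 Pl Pw u [s [Hs ->]]; elim: s Hs => [|p s IH] /=; first by rewrite big_nil.
move=> /andP [/eqP Hp Hs]; rewrite big_cons; apply: Pl; last exact: IH.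
exact: Pw.
Qed.

Lemma ad_lin a c u v : ad a (c *: u + v) = c *: ad a u + ad a v.
Proof.
by rewrite /ad mulrDr mulrDl -scalerAr -scalerAl scalerBr opprD addrACA.
Qed.

Lemma ad_word a x u : ad a (iota x * u) = iota (br a x) * u + iota x * ad a u.
Proof.
case: Hiota => _ Hb.
by rewrite Hb /ad mulrBl mulrBr !mulrA addrA subrK.
Qed.

Lemma agree_words k : forall bs, size bs = k ->
  c1 (w bs) = c2 (w bs) /\ forall a, Sk k (ad a (w bs)).
Proof.
case: H1 => L1 O1 R1; case: H2 => L2 O2 R2.
have Pcl : forall k, forall a u v,
   (c1 u = c2 u /\ forall a, Sk k (ad a u)) ->
   (c1 v = c2 v /\ forall a, Sk k (ad a v)) ->
   (c1 (a *: u + v) = c2 (a *: u + v) /\ forall b, Sk k (ad b (a *: u + v))).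
  move=> k' a u v [E1 S1] [E2 S2]; split; first by rewrite L1 L2 E1 E2.
  by move=> b; rewrite ad_lin; apply: Sk_lin.
have P0 : forall k, c1 0 = c2 0 /\ forall a, Sk k (ad a 0).
  move=> k'; split; first by rewrite (linmap0 L1) (linmap0 L2).
  by move=> a; rewrite /ad mulr0 mul0r subrr; apply: Sk0.
elim: k => [|k IH] [|x bs] //= Hs.
  rewrite /w big_nil O1 O2; split => // a.
  by rewrite /ad mulr1 mul1r subrr; apply: Sk0.
case: Hs => Hs.
have IHS : forall u, Sk k u -> c1 u = c2 u /\ forall a, Sk k (ad a u).
  by apply: Sk_ind; [apply: P0 | apply: Pcl | apply: IH].
have [E S] := IH bs Hs.
rewrite /w big_cons -/(w bs); split.
  rewrite R1 R2 E; congr (_ - _).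
  by have [E' _] := IHS _ (S (Q x)).
move=> a; rewrite ad_word -[X in X + _]scale1r; apply: Sk_lin.
  rewrite (_ : iota (br a x) * w bs = w (br a x :: bs)); last by rewrite /w big_cons.
  by apply: Sk_w => /=; rewrite Hs.
exact: Sk_mull.
Qed.

Lemma agree_expU n y : c1 (expU n (iota y)) = c2 (expU n (iota y)).
Proof.
case: H1 => L1 _ _; case: H2 => L2 _ _.
rewrite /expU (linmap_sum L1) (linmap_sum L2); apply: eq_bigr => i _.
rewrite (linmapZ L1) (linmapZ L2); congr (_ *: _).
have -> : iota y ^+ i = w (nseq i y).
  elim: (nat_of_ord i) => [|k IH]; first by rewrite expr0 /w big_nil.
  by rewrite exprS IH /w /= big_cons.
by have [E _] := agree_words (size_nseq i y).
Qed.
End Agree.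

Theorem proposition4p18
  (K : fieldType) (Kchar0 : [pchar K] =i pred0)
  (g : lmodType K) (br : g -> g -> g) (F : nat -> pred g) (R : g -> g)
  (Hlie : is_lie_bracket br) (HF : is_lie_filtration br F)
  (HR : filtered_RB br F R)
  (U : algType K) (iota : g -> U) (HU : is_UEA br iota)
  (calR : U -> U) (HcalR : RB_lift iota R calR)
  (phi phi_inv : g -> g) (Hphi : filtered_lie_aut br F phi phi_inv)
  (Phi_inv : U -> U) (HPhi_inv : alg_morph Phi_inv)
  (HPhi_inv_ext : forall x, Phi_inv (iota x) = iota (phi_inv x)) :
  let Q := fun x => phi_inv (R (phi x)) in
  filtered_RB br F Q /\
  (exists calQ : U -> U, RB_lift iota Q calQ) /\
  (forall calQ : U -> U, RB_lift iota Q calQ ->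
     forall x : nat -> g, hatg_elt F x ->
       hatU_eq iota F (frakR iota calQ x)
                      (hatmap Phi_inv (frakR iota calR (hatmap phi x)))).
Proof.
move=> Q.
case: HR => [[LR RBR] FR].
case: Hphi => Lphi Bphi phiK phi_invK Fphi.
case: HU => [[Liota Biota] Huniv].
case: (HPhi_inv) => LPi Pi1 PiM.
case: (HcalR) => LcR cR1 cRM.
have Linv : linmap phi_inv.
  move=> a x y; apply: (can_inj phiK).
  by rewrite phi_invK Lphi !phi_invK.
have LQ : linmap Q.
  by move=> a x y; rewrite /Q Lphi LR Linv.
have Hlm : lie_map br (fun x => iota (phi x)).
  split; first by move=> a x y; rewrite Lphi Liota.
  by move=> x y; rewrite Bphi Biota.
have [[Phi [HPhi PhiE]] _] := Huniv U _ Hlm.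
case: (HPhi) => LPhi Phi1 PhiM.
set calQ0 := fun u => Phi_inv (calR (Phi u)).
have HQ0 : RB_lift iota Q calQ0.
  split.
  - by move=> a x y; rewrite /calQ0 LPhi LcR LPi.
  - by rewrite /calQ0 Phi1 cR1 Pi1.
  move=> x h; rewrite /calQ0 PhiM PhiE cRM (linmapB LPi) PiM HPhi_inv_ext.
  congr (_ - _); congr (Phi_inv (calR _)).
  by rewrite (linmapB LPhi) !PhiM PhiE /Q phi_invK.
split.
  split; last first.
    move=> n x Hn Hx; rewrite /Q; apply/(Fphi n _ Hn); rewrite phi_invK.
    by apply: FR => //; apply/(Fphi n _ Hn).
  split => // x y; apply: (can_inj phiK); rewrite phi_invK.
  rewrite /Q Bphi !phi_invK RBR.
  by rewrite !(linmapD Lphi) !Bphi !phi_invK.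
split; first by exists calQ0.
move=> calQ HQ x _ n.
have -> : frakR iota calQ x n = hatmap Phi_inv (frakR iota calR (hatmap phi x)) n.
  rewrite /frakR /hatmap (agree_expU (conj Liota Biota) HQ HQ0) /calQ0 (alg_expU HPhi) PhiE.
  by rewrite (alg_logU HPhi_inv).
by exists [::]; rewrite subrr big_nil.
Qed.
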